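(* Let $\mu$ be the uniform probability measure on $\{-1,1\}^n$. Let $J$ be an $n\times n$ Hermitian matrix with $J_{i,i}=0$ for all $i$, and $h\in\mathbb{R}^n$. Then $$\log\int e^{\langle x,Jx\rangle+\langle h,x\rangle}\,d\mu(x)\le\sup_{y\in[-1,1]^n}\{\langle y,Jy\rangle+\langle h,y\rangle-I(y)\}+\kappa\,\|J\|_2\sqrt n,$$ where $\kappa$ is a universal positive constant and $\|J\|_2=\big(\sum_{i,j}|J_{i,j}|^2\big)^{1/2}$.
   Context: $I(x)=\sum_{i=1}^n\big(\frac{1+x_i}{2}\log(1+x_i)+\frac{1-x_i}{2}\log(1-x_i)\big)$ for $x\in[-1,1]^n$ and $+\infty$ otherwise. *)

(* Defs.v *)
From mathcomp Require Import all_boot all_order all_algebra.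
From mathcomp Require Import all_classical all_reals all_analysis.
From mathcomp Require Import complex.
Set Implicit Arguments. Unset Strict Implicit. Unset Printing Implicit Defensive.
Import Order.TTheory GRing.Theory Num.Theory.
Local Open Scope ring_scope.
Local Open Scope classical_set_scope.

Definition hermitian_mx (R : rcfType) (n : nat) (J : 'M[R[i]]_n) : Prop :=
  forall i j : 'I_n, J j i = conjc (J i j).

Definition qform (R : rcfType) (n : nat) (J : 'M[R[i]]_n) (x : 'I_n -> R) : R[i] :=
  \sum_(i < n) \sum_(j < n) ((x i)%:C)%C * J i j * ((x j)%:C)%C.

Definition dot_real (R : rcfType) (n : nat) (h x : 'I_n -> R) : R :=
  \sum_(i < n) h i * x i.

Definition hs_norm (R : rcfType) (n : nat) (J : 'M[R[i]]_n) : R :=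
  Num.sqrt (\sum_(i < n) \sum_(j < n) (complex.Re (J i j) ^+ 2 + complex.Im (J i j) ^+ 2)).

(* rate function I(x) on [-1,1]^n (convention 0 log 0 = 0, since ln 0 = 0) *)
Definition Irate (R : realType) (n : nat) (x : 'I_n -> R) : R :=
  \sum_(i < n) ((1 + x i) / 2 * ln (1 + x i) + (1 - x i) / 2 * ln (1 - x i)).

Definition spin_of (R : ringType) (n : nat) (s : {ffun 'I_n -> bool}) : 'I_n -> R :=
  fun i => if s i then 1 else -1.

Definition unif_cube_int (R : realType) (n : nat) (f : ('I_n -> R) -> R) : R :=
  (2 ^+ n)^-1 * \sum_(s : {ffun 'I_n -> bool}) f (spin_of R s).

Definition pm1_cube (R : realType) (n : nat) : set ('I_n -> R) :=
  [set y | forall i, -1 <= y i <= 1].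

(* Main.v *)
Require Import Defs.
From mathcomp Require Import all_boot all_order all_algebra.
From mathcomp Require Import all_classical all_reals all_analysis.
From mathcomp Require Import complex.
From mathcomp Require Import ring lra.
Import Order.TTheory GRing.Theory Num.Theory.
Local Open Scope ring_scope.
Local Open Scope classical_set_scope.

Set Implicit Arguments. Unset Strict Implicit. Unset Printing Implicit Defensive.
Section Main.
Variable R : realType.

Definition qf n (A : 'I_n -> 'I_n -> R) (y : 'I_n -> R) : R :=
  \sum_(i < n) \sum_(j < n) A i j * (y i * y j).
Definition Phi n (A : 'I_n -> 'I_n -> R) (h : 'I_n -> R) (c : R) (y : 'I_n -> R) : R :=
  qf A y + dot_real h y + c - Irate y.
Definition Zf n (A : 'I_n -> 'I_n -> R) (h : 'I_n -> R) (c : R) : R :=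
  (2 ^+ n)^-1 * \sum_(s : {ffun 'I_n -> bool})
     expR (qf A (spin_of R s) + dot_real h (spin_of R s) + c).
Definition ycons n (m : R) (y : 'I_n -> R) : 'I_n.+1 -> R :=
  fun i => if unlift ord0 i is Some j then y j else m.
Definition scons n (b : bool) (s : {ffun 'I_n -> bool}) : {ffun 'I_n.+1 -> bool} :=
  [ffun i => if unlift ord0 i is Some j then s j else b].
Definition I1 (m : R) : R := (1 + m) / 2 * ln (1 + m) + (1 - m) / 2 * ln (1 - m).

Lemma ycons0 n m (y : 'I_n -> R) : ycons m y ord0 = m.
Proof. by rewrite /ycons unlift_none. Qed.
Lemma yconsS n m (y : 'I_n -> R) j : ycons m y (lift ord0 j) = y j.
Proof. by rewrite /ycons liftK. Qed.

Lemma sum_ffunS n (F : {ffun 'I_n.+1 -> bool} -> R) :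
  \sum_(s : {ffun 'I_n.+1 -> bool}) F s =
  \sum_(b : bool) \sum_(s : {ffun 'I_n -> bool}) F (scons b s).
Proof.
rewrite pair_big /=.
pose g (p : bool * {ffun 'I_n -> bool}) := scons p.1 p.2.
pose g' (s : {ffun 'I_n.+1 -> bool}) := (s ord0, [ffun j => s (lift ord0 j)]).
rewrite (reindex g) /=; last first.
  exists g' => [[b s]|s] _.
    rewrite /g /g' /scons /= ffunE unlift_none; congr pair.
    by apply/ffunP => j; rewrite !ffunE liftK.
  apply/ffunP => i; rewrite /g /g' /scons /= ffunE.
  case: unliftP => [j ->|->]; by rewrite ?ffunE.
by apply: eq_bigr => -[b s].
Qed.

Lemma spin_scons n b (s : {ffun 'I_n -> bool}) :
  spin_of R (scons b s) = ycons (if b then 1 else -1) (spin_of R s).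
Proof.
apply/funext => i; rewrite /spin_of /ycons /scons ffunE.
by case: unlift.
Qed.

Definition Ar n (A : 'I_n.+1 -> 'I_n.+1 -> R) : 'I_n -> 'I_n -> R :=
  fun i j => A (lift ord0 i) (lift ord0 j).
Definition arow n (A : 'I_n.+1 -> 'I_n.+1 -> R) : 'I_n -> R :=
  fun j => A ord0 (lift ord0 j).
Definition hr n (h : 'I_n.+1 -> R) : 'I_n -> R := fun j => h (lift ord0 j).

Lemma qf_cons n (A : 'I_n.+1 -> 'I_n.+1 -> R) m y :
  (forall i, A i i = 0) -> (forall i j, A i j = A j i) ->
  qf A (ycons m y) = 2 * m * dot_real (arow A) y + qf (Ar A) y.
Proof.
move=> A0 AS; rewrite /qf big_ord_recl (big_ord_recl n) ycons0 A0 mul0r add0r.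
have E: forall i, \sum_(j < n.+1) A (lift ord0 i) j * (ycons m y (lift ord0 i) * ycons m y j)
   = A (lift ord0 i) ord0 * (y i * m) + \sum_(j<n) Ar A i j * (y i * y j).
  move=> i; rewrite big_ord_recl ycons0 yconsS; congr (_+_).
  by apply: eq_bigr => j _; rewrite !yconsS.
rewrite (eq_bigr _ (fun i _ => E i)) big_split /= addrA; congr (_+_).
rewrite /dot_real !mulr_sumr -big_split; apply: eq_bigr => i _.
rewrite yconsS /arow (AS (lift _ _)).
rewrite -[LHS]/(_ + _ : R); ring.
Qed.

Lemma dot_cons n (h : 'I_n.+1 -> R) m y :
  dot_real h (ycons m y) = h ord0 * m + dot_real (hr h) y.
Proof.
rewrite /dot_real big_ord_recl ycons0; congr (_ + _); apply: eq_bigr => i _.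
by rewrite yconsS.
Qed.

Lemma Irate_cons n m (y : 'I_n -> R) : Irate (ycons m y) = I1 m + Irate y.
Proof.
rewrite /Irate big_ord_recl ycons0; congr (_ + _); apply: eq_bigr => i _.
by rewrite yconsS.
Qed.


Lemma dot_lin n (h g y : 'I_n -> R) k :
  dot_real (fun j => h j + k * g j) y = dot_real h y + k * dot_real g y.
Proof.
rewrite /dot_real mulr_sumr -big_split; apply: eq_bigr => i _ /=; ring.
Qed.

Definition hp n (A : 'I_n.+1 -> 'I_n.+1 -> R) h : 'I_n -> R :=
  fun j => hr h j + 2 * arow A j.
Definition hm n (A : 'I_n.+1 -> 'I_n.+1 -> R) h : 'I_n -> R :=
  fun j => hr h j + (-2) * arow A j.

Lemma Zf_rec n (A : 'I_n.+1 -> 'I_n.+1 -> R) h c :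
  (forall i, A i i = 0) -> (forall i j, A i j = A j i) ->
  Zf A h c = (Zf (Ar A) (hp A h) (c + h ord0) + Zf (Ar A) (hm A h) (c - h ord0)) / 2.
Proof.
move=> A0 AS; rewrite /Zf sum_ffunS big_bool /=.
have E: forall b : bool, forall s : {ffun 'I_n -> bool},
  qf A (spin_of R (scons b s)) + dot_real h (spin_of R (scons b s)) + c =
  qf (Ar A) (spin_of R s) + dot_real (if b then hp A h else hm A h) (spin_of R s)
   + (if b then c + h ord0 else c - h ord0).
  move=> b s; rewrite spin_scons qf_cons // dot_cons.
  by case: b; rewrite /hp /hm dot_lin; ring.
rewrite (eq_bigr _ (fun s _ => congr1 expR (E true s))).
rewrite (eq_bigr _ (fun s _ => congr1 expR (E false s))) /=.
rewrite exprS invfM; ring.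
Qed.

Lemma Zf_gt0 n (A : 'I_n -> 'I_n -> R) h c :
  (forall i, A i i = 0) -> (forall i j, A i j = A j i) -> 0 < Zf A h c.
Proof.
elim: n A h c => [|n IH] A h c A0 AS.
  rewrite /Zf expr0 invr1 mul1r.
  rewrite (big_pred1 [ffun i => false]) ?expR_gt0 //.
  by move=> s /=; apply/esym/eqP/ffunP => -[].
rewrite Zf_rec // divr_gt0 //.
have A0' : forall i, Ar A i i = 0 by move=> i; exact: A0.
have AS' : forall i j, Ar A i j = Ar A j i by move=> i j; exact: AS.
by rewrite addr_gt0 // IH.
Qed.


Lemma ln_split (a b : R) : 0 < a -> 0 < b ->
  ln ((a + b) / 2) = a / (a + b) * ln a + (1 - a / (a + b)) * ln b
                     - I1 (2 * (a / (a + b)) - 1).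
Proof.
move=> a0 b0; have ab0 : 0 < a + b by rewrite addr_gt0.
have h0 : 0 < (a + b) / 2 by rewrite divr_gt0.
have E1 : 1 + (2 * (a / (a + b)) - 1) = a / ((a + b) / 2).
  by field; rewrite gt_eqF.
have E2 : 1 - (2 * (a / (a + b)) - 1) = b / ((a + b) / 2).
  by field; rewrite gt_eqF.
rewrite /I1 E1 E2 !ln_div ?posrE //.
have -> : (a / ((a + b) / 2)) / 2 = a / (a + b) by field; rewrite gt_eqF.
have -> : (b / ((a + b) / 2)) / 2 = 1 - a / (a + b) by field; rewrite gt_eqF.
ring.
Qed.

Lemma Esum_lin n (l : seq (R * ('I_n -> R))) F G k K :
  \sum_(q <- l) q.1 * (F q.2 + k * G q.2 + K) =
  \sum_(q <- l) q.1 * F q.2 + k * \sum_(q <- l) q.1 * G q.2 + K * \sum_(q <- l) q.1.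
Proof.
rewrite !mulr_sumr -!big_split; apply: eq_bigr => q _ /=; ring.
Qed.

Definition lcomb n (p m : R) (l1 l2 : seq (R * ('I_n -> R))) : seq (R * ('I_n.+1 -> R)) :=
  map (fun q => (p * q.1, ycons m q.2)) l1 ++ map (fun q => ((1 - p) * q.1, ycons m q.2)) l2.

Lemma Ecat n p m (l1 l2 : seq (R * ('I_n -> R))) F :
  \sum_(q <- lcomb p m l1 l2) q.1 * F q.2 =
  p * \sum_(q <- l1) q.1 * F (ycons m q.2) + (1 - p) * \sum_(q <- l2) q.1 * F (ycons m q.2).
Proof.
rewrite /lcomb big_cat !big_map /= !mulr_sumr; congr (_ + _); apply: eq_bigr => q _; ring.
Qed.

Lemma ED n (l : seq (R * ('I_n -> R))) a :
  \sum_(q <- l) q.1 * dot_real a q.2 = dot_real a (fun j => \sum_(q <- l) q.1 * q.2 j).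
Proof.
rewrite /dot_real; under eq_bigr do rewrite mulr_sumr.
rewrite exchange_big; apply: eq_bigr => j _ /=; rewrite mulr_sumr.
by apply: eq_bigr => q _; ring.
Qed.

Lemma Phi_cons_p n (A : 'I_n.+1 -> 'I_n.+1 -> R) h c m y :
  (forall i, A i i = 0) -> (forall i j, A i j = A j i) ->
  Phi A h c (ycons m y) = Phi (Ar A) (hp A h) (c + h ord0) y
     + (-(2 - 2 * m)) * dot_real (arow A) y + (-((1 - m) * h ord0 + I1 m)).
Proof.
move=> A0 AS; rewrite /Phi qf_cons // dot_cons Irate_cons /hp dot_lin; ring.
Qed.

Lemma Phi_cons_m n (A : 'I_n.+1 -> 'I_n.+1 -> R) h c m y :
  (forall i, A i i = 0) -> (forall i j, A i j = A j i) ->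
  Phi A h c (ycons m y) = Phi (Ar A) (hm A h) (c - h ord0) y
     + (2 + 2 * m) * dot_real (arow A) y + ((1 + m) * h ord0 - I1 m).
Proof.
move=> A0 AS; rewrite /Phi qf_cons // dot_cons Irate_cons /hm dot_lin; ring.
Qed.


Lemma dsum_cons n (F : 'I_n.+1 -> 'I_n.+1 -> R) :
  \sum_(i < n.+1) \sum_(j < n.+1) F i j =
  F ord0 ord0 + \sum_(j < n) F ord0 (lift ord0 j) + \sum_(i < n) F (lift ord0 i) ord0
  + \sum_(i < n) \sum_(j < n) F (lift ord0 i) (lift ord0 j).
Proof.
rewrite big_ord_recl (big_ord_recl n).
under [X in _ + X = _]eq_bigr do rewrite big_ord_recl.
by rewrite big_split /= !addrA.
Qed.

Definition Cnew n (p : R) (C1 C2 : 'I_n -> 'I_n -> R) (cc : 'I_n -> R) :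
  'I_n.+1 -> 'I_n.+1 -> R :=
  fun i j => match unlift ord0 i, unlift ord0 j with
  | Some i', Some j' => p * C1 i' j' + (1 - p) * C2 i' j'
  | Some i', None => cc i'
  | None, Some j' => cc j'
  | None, None => 0 end.

Lemma AC_cons n (A : 'I_n.+1 -> 'I_n.+1 -> R) p C1 C2 cc :
  (forall i, A i i = 0) -> (forall i j, A i j = A j i) ->
  \sum_(i < n.+1) \sum_(j < n.+1) A i j * Cnew p C1 C2 cc i j =
  2 * dot_real (arow A) cc + p * (\sum_(i < n) \sum_(j < n) Ar A i j * C1 i j)
  + (1 - p) * (\sum_(i < n) \sum_(j < n) Ar A i j * C2 i j).
Proof.
move=> A0 AS; rewrite dsum_cons /Cnew unlift_none A0 mul0r add0r.
under eq_bigr do rewrite liftK.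
under [X in _ + X + _ = _]eq_bigr do rewrite liftK AS.
under [X in _ + X = _]eq_bigr do under eq_bigr do rewrite !liftK.
rewrite /dot_real /Ar /arow !mulr_sumr -!big_split /=.
apply: eq_bigr => i _; rewrite !mulr_sumr -[RHS]addrA -big_split /=.
congr (_ + _); last by apply: eq_bigr => j _; ring.
rewrite -[LHS]/(_ + _ : R); ring.
Qed.


Lemma CC_cons n p (C1 C2 : 'I_n -> 'I_n -> R) cc :
  \sum_(i < n.+1) \sum_(j < n.+1) Cnew p C1 C2 cc i j ^+ 2 =
  2 * \sum_(j < n) cc j ^+ 2 +
  \sum_(i < n) \sum_(j < n) (p * C1 i j + (1 - p) * C2 i j) ^+ 2.
Proof.
rewrite dsum_cons /Cnew unlift_none expr0n /= add0r.
under eq_bigr do rewrite liftK.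
under [X in _ + X = _]eq_bigr do under eq_bigr do rewrite !liftK.
by rewrite mulr_natl mulr2n.
Qed.


Lemma Zf0 (A : 'I_0 -> 'I_0 -> R) h c : Zf A h c = expR c.
Proof.
rewrite /Zf expr0 invr1 mul1r.
rewrite (big_pred1 [ffun i => false]); last first.
  by move=> s /=; apply/esym/eqP/ffunP => -[].
by rewrite /qf /dot_real !big_ord0 !add0r.
Qed.

Lemma dot_scale_sub n (a u v : 'I_n -> R) k :
  dot_real a (fun j => k * (u j - v j)) = k * (dot_real a u - dot_real a v).
Proof.
rewrite /dot_real mulrBr !mulr_sumr -sumrB; apply: eq_bigr => j _; ring.
Qed.

Lemma sq_conv (p x y : R) : 0 <= p -> p <= 1 ->
  (p * x + (1 - p) * y) ^+ 2 <= p * x ^+ 2 + (1 - p) * y ^+ 2.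
Proof.
move=> p0 p1; rewrite -subr_ge0.
have -> : p * x ^+ 2 + (1 - p) * y ^+ 2 - (p * x + (1 - p) * y) ^+ 2
   = p * (1 - p) * (x - y) ^+ 2 by ring.
by rewrite mulr_ge0 ?sqr_ge0 // mulr_ge0 // subr_ge0.
Qed.

Lemma cc_bound (p u v : R) : 0 <= p -> p <= 1 ->
  (2 * p * (1 - p) * (u - v)) ^+ 2 <= p * u ^+ 2 + (1 - p) * v ^+ 2 - (p * u + (1 - p) * v) ^+ 2.
Proof.
move=> p0 p1; rewrite -subr_ge0.
have -> : p * u ^+ 2 + (1 - p) * v ^+ 2 - (p * u + (1 - p) * v) ^+ 2
   - (2 * p * (1 - p) * (u - v)) ^+ 2 = p * (1 - p) * ((1 - 2 * p) * (u - v)) ^+ 2 by ring.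
by rewrite mulr_ge0 ?sqr_ge0 // mulr_ge0 // subr_ge0.
Qed.

Definition okp n (q : R * ('I_n -> R)) : bool := (0 <= q.1) && [forall i, -1 <= q.2 i <= 1].
Definition mu n (l : seq (R * ('I_n -> R))) j := \sum_(q <- l) q.1 * q.2 j.
Definition S2 n (l : seq (R * ('I_n -> R))) j := \sum_(q <- l) q.1 * q.2 j ^+ 2.


Lemma S2_cons0 n p m (l1 l2 : seq (R * ('I_n -> R))) :
  \sum_(q <- l1) q.1 = 1 -> \sum_(q <- l2) q.1 = 1 ->
  S2 (lcomb p m l1 l2) ord0 = m ^+ 2.
Proof.
move=> s1 s2; rewrite /S2 /lcomb big_cat !big_map /=.
under eq_bigr do rewrite ycons0.
under [X in _ + X = _]eq_bigr do rewrite ycons0.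
by rewrite -!mulr_suml -!mulr_sumr s1 s2; ring.
Qed.

Lemma mu_cons0 n p m (l1 l2 : seq (R * ('I_n -> R))) :
  \sum_(q <- l1) q.1 = 1 -> \sum_(q <- l2) q.1 = 1 ->
  mu (lcomb p m l1 l2) ord0 = m.
Proof.
move=> s1 s2; rewrite /mu /lcomb big_cat !big_map /=.
under eq_bigr do rewrite ycons0.
under [X in _ + X = _]eq_bigr do rewrite ycons0.
by rewrite -!mulr_suml -!mulr_sumr s1 s2; ring.
Qed.

Lemma S2_consS n p m (l1 l2 : seq (R * ('I_n -> R))) j :
  S2 (lcomb p m l1 l2) (lift ord0 j) = p * S2 l1 j + (1 - p) * S2 l2 j.
Proof.
rewrite /S2 /lcomb big_cat !big_map /= !mulr_sumr.
congr (_ + _); apply: eq_bigr => q _; rewrite yconsS; ring.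
Qed.

Lemma mu_consS n p m (l1 l2 : seq (R * ('I_n -> R))) j :
  mu (lcomb p m l1 l2) (lift ord0 j) = p * mu l1 j + (1 - p) * mu l2 j.
Proof.
rewrite /mu /lcomb big_cat !big_map /= !mulr_sumr.
congr (_ + _); apply: eq_bigr => q _; rewrite yconsS; ring.
Qed.

Lemma main_ind n : forall (A : 'I_n -> 'I_n -> R) h c,
  (forall i, A i i = 0) -> (forall i j, A i j = A j i) ->
  exists (l : seq (R * ('I_n -> R))) (C : 'I_n -> 'I_n -> R),
  [/\ all (@okp n) l, \sum_(q <- l) q.1 = 1,
   ln (Zf A h c) <= \sum_(q <- l) q.1 * Phi A h c q.2
                    + \sum_(i < n) \sum_(j < n) A i j * C i j &
   \sum_(i < n) \sum_(j < n) C i j ^+ 2 <= 2 * \sum_(j < n) (S2 l j - mu l j ^+ 2)].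
Proof.
elim: n => [|n IH] A h c A0 AS.
  exists [:: (1, fun _ => 0)], (fun _ _ => 0); split.
  - by rewrite /= andbT /okp /= ler01 /=; apply/forallP => -[k].
  - by rewrite big_cons big_nil addr0.
  - rewrite Zf0 expRK big_cons big_nil /Phi /qf /dot_real /Irate !big_ord0.
    by rewrite /= !addr0 add0r subr0 mul1r.
  - by rewrite !big_ord0 mulr0.
have A0' : forall i, Ar A i i = 0 by move=> i; exact: A0.
have AS' : forall i j, Ar A i j = Ar A j i by move=> i j; exact: AS.
have a0 := Zf_gt0 (hp A h) (c + h ord0) A0' AS'.
have b0 := Zf_gt0 (hm A h) (c - h ord0) A0' AS'.
have [l1 [C1 [ok1 s1 L1 V1]]] := IH (Ar A) (hp A h) (c + h ord0) A0' AS'.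
have [l2 [C2 [ok2 s2 L2 V2]]] := IH (Ar A) (hm A h) (c - h ord0) A0' AS'.
set a := Zf (Ar A) (hp A h) (c + h ord0) in a0 L1.
set b := Zf (Ar A) (hm A h) (c - h ord0) in b0 L2.
set p := a / (a + b).
have ab0 : 0 < a + b by rewrite addr_gt0.
have p0 : 0 <= p by rewrite divr_ge0 // ltW.
have p1 : p <= 1 by rewrite ler_pdivrMr // mul1r lerDl ltW.
set m := 2 * p - 1.
set cc := fun j => 2 * p * (1 - p) * (mu l1 j - mu l2 j).
exists (lcomb p m l1 l2), (Cnew p C1 C2 cc); split.
- rewrite /lcomb all_cat !all_map; apply/andP; split;
    [apply: sub_all ok1 | apply: sub_all ok2] => q /andP[q0 /forallP qf];
    rewrite /okp /= mulr_ge0 ?subr_ge0 //=; apply/forallP => i;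
    rewrite /ycons; (case: unlift => [j|]; [exact: qf | rewrite /m; apply/andP; split; lra]).
- rewrite /lcomb big_cat !big_map /= -!mulr_sumr s1 s2; ring.
- rewrite Zf_rec // -/a -/b ln_split // -/p -/m.
  apply: (@le_trans _ _ (p * (\sum_(q <- l1) q.1 * Phi (Ar A) (hp A h) (c + h ord0) q.2 +
    \sum_(i < n) \sum_(j < n) Ar A i j * C1 i j) + (1 - p) * (\sum_(q <- l2) q.1 * Phi (Ar A) (hm A h) (c - h ord0) q.2 +
    \sum_(i < n) \sum_(j < n) Ar A i j * C2 i j) - I1 m)).
    by rewrite lerD2r; apply: lerD; apply: ler_wpM2l => //; rewrite subr_ge0.
  have E1 : \sum_(q <- l1) q.1 * Phi A h c (ycons m q.2) =
     \sum_(q <- l1) q.1 * Phi (Ar A) (hp A h) (c + h ord0) q.2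
     + (-(2 - 2 * m)) * dot_real (arow A) (mu l1) + (-((1 - m) * h ord0 + I1 m)).
    rewrite (eq_bigr (fun q => q.1 * (Phi (Ar A) (hp A h) (c + h ord0) q.2
       + (-(2 - 2 * m)) * dot_real (arow A) q.2 + (-((1 - m) * h ord0 + I1 m))))); last first.
      by move=> q _; rewrite Phi_cons_p.
    by rewrite Esum_lin s1 mulr1 ED.
  have E2 : \sum_(q <- l2) q.1 * Phi A h c (ycons m q.2) =
     \sum_(q <- l2) q.1 * Phi (Ar A) (hm A h) (c - h ord0) q.2
     + (2 + 2 * m) * dot_real (arow A) (mu l2) + ((1 + m) * h ord0 - I1 m).
    rewrite (eq_bigr (fun q => q.1 * (Phi (Ar A) (hm A h) (c - h ord0) q.2
       + (2 + 2 * m) * dot_real (arow A) q.2 + ((1 + m) * h ord0 - I1 m)))); last first.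
      by move=> q _; rewrite Phi_cons_m.
    by rewrite Esum_lin s2 mulr1 ED.
  rewrite Ecat E1 E2 AC_cons // /cc dot_scale_sub /m le_eqVlt; apply/orP; left; apply/eqP.
  ring.
- rewrite CC_cons.
  have H1 : \sum_(i < n) \sum_(j < n) (p * C1 i j + (1 - p) * C2 i j) ^+ 2 <=
     p * (\sum_(i < n) \sum_(j < n) C1 i j ^+ 2) + (1 - p) * (\sum_(i < n) \sum_(j < n) C2 i j ^+ 2).
    rewrite !mulr_sumr -big_split; apply: ler_sum => i _.
    rewrite !mulr_sumr -big_split; apply: ler_sum => j _; exact: sq_conv.
  have p1' : 0 <= 1 - p by rewrite subr_ge0.
  apply: le_trans (lerD (lexx _) H1) _.
  apply: le_trans (lerD (lexx _) (lerD (ler_wpM2l p0 V1) (ler_wpM2l p1' V2))) _.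
  rewrite big_ord_recl S2_cons0 // mu_cons0 // subrr add0r.
  under [X in _ <= _ * X]eq_bigr do rewrite S2_consS mu_consS.
  rewrite !mulr_sumr -!big_split; apply: ler_sum => j _ /=.
  have := cc_bound (mu l1 j) (mu l2 j) p0 p1.
  rewrite /cc /=. lra.
Qed.

Lemma ReD (x y : R[i]) : complex.Re (x + y) = complex.Re x + complex.Re y.
Proof. by case: x; case: y. Qed.
Lemma Re_sum n (F : 'I_n -> R[i]) : complex.Re (\sum_(i < n) F i) = \sum_(i < n) complex.Re (F i).
Proof. by apply: (big_morph _ ReD). Qed.
Lemma Re_term (a b : R) (z : R[i]) :
  complex.Re (((a%:C)%C * z * (b%:C)%C)) = complex.Re z * (a * b).
Proof. case: z => u v /=. ring. Qed.
Lemma Re_conj (z : R[i]) : complex.Re (conjc z) = complex.Re z.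
Proof. by case: z. Qed.

Lemma ulnu (u : R) : 0 <= u -> u - 1 <= u * ln u.
Proof.
rewrite le_eqVlt => /orP[/eqP <-|u0]; first by rewrite ln0 // mul0r sub0r lerN10.
have ui : 0 < u^-1 by rewrite invr_gt0.
have h1 : -1 < u^-1 - 1 by lra.
have := le_ln1Dx h1; rewrite addrC subrK lnV ?posrE // => H.
have : u * (- ln u) <= u * (u^-1 - 1) by rewrite ler_wpM2l // ltW.
rewrite mulrBr mulfV ?gt_eqF // mulr1 mulrN; lra.
Qed.

Lemma I1_ge0 (t : R) : -1 <= t <= 1 -> 0 <= I1 t.
Proof.
move=> /andP[t1 t2]; rewrite /I1.
have h1 := ulnu (_ : 0 <= 1 + t); have h2 := ulnu (_ : 0 <= 1 - t).
have a1 : 0 <= 1 + t by lra.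
have a2 : 0 <= 1 - t by lra.
move: (h1 a1) (h2 a2); lra.
Qed.

Lemma Irate_ge0 n (y : 'I_n -> R) : (forall i, -1 <= y i <= 1) -> 0 <= Irate y.
Proof. by move=> hy; rewrite /Irate sumr_ge0 // => i _; apply: (I1_ge0 (hy i)). Qed.

Lemma Ebound n (l : seq (R * ('I_n -> R))) (F : ('I_n -> R) -> R) B :
  all (@okp n) l -> (forall y, (forall i, -1 <= y i <= 1) -> F y <= B) ->
  \sum_(q <- l) q.1 * F q.2 <= (\sum_(q <- l) q.1) * B.
Proof.
move=> ok HF; elim: l ok => [|q l IHl] /=; first by rewrite !big_nil mul0r.
move=> /andP[/andP[q0 /forallP qc] okl]; rewrite !big_cons mulrDl; apply: lerD.
  by apply: ler_wpM2l => //; apply: HF => i; exact: qc.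
exact: IHl.
Qed.


Lemma amgm_sum n (A C : 'I_n -> 'I_n -> R) t :
  2 * t * (\sum_(i < n) \sum_(j < n) A i j * C i j) <=
  t ^+ 2 * (\sum_(i < n) \sum_(j < n) A i j ^+ 2) + \sum_(i < n) \sum_(j < n) C i j ^+ 2.
Proof.
rewrite !mulr_sumr -big_split; apply: ler_sum => i _.
rewrite !mulr_sumr -big_split; apply: ler_sum => j _ /=.
rewrite -subr_ge0.
have -> : t ^+ 2 * A i j ^+ 2 + C i j ^+ 2 - 2 * t * (A i j * C i j) = (t * A i j - C i j) ^+ 2 by ring.
exact: sqr_ge0.
Qed.

Lemma final_core (X F s N : R) : 0 <= F -> 0 < s -> s ^+ 2 = N ->
  (forall t, 2 * t * X <= t ^+ 2 * F ^+ 2 + 2 * N) -> X <= 2 * F * s.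
Proof.
move=> F0 sp ss H.
have N0 : 0 <= N by rewrite -ss sqr_ge0.
have [XF|XF] := leP X (2 * F * s); first by [].
exfalso.
have Xp : 0 < X by apply: le_lt_trans XF; apply: mulr_ge0; [apply: mulr_ge0 | apply: ltW].
have [Fz|Fp] := leP F 0.
  have F00 : F = 0 by apply/le_anti; rewrite Fz F0.
  have := H ((N + 1) / X); rewrite F00 expr0n /= mulr0 add0r.
  have -> : 2 * ((N + 1) / X) * X = 2 * (N + 1) by field; rewrite gt_eqF.
  lra.
have := H (s / F).
have -> : (s / F) ^+ 2 * F ^+ 2 = s ^+ 2 by field; rewrite gt_eqF.
rewrite ss => H1.
have H2 : 2 * s * X <= 3 * s ^+ 2 * F.
  have := ler_wpM2r (ltW Fp) H1.
  have -> : 2 * (s / F) * X * F = 2 * s * X by field; rewrite gt_eqF.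
  by rewrite -ss; lra.
nra.
Qed.

Lemma final_bound n (A C : 'I_n -> 'I_n -> R) (F : R) :
  0 <= F ->
  \sum_(i < n) \sum_(j < n) A i j ^+ 2 <= F ^+ 2 ->
  \sum_(i < n) \sum_(j < n) C i j ^+ 2 <= 2 * n%:R ->
  \sum_(i < n) \sum_(j < n) A i j * C i j <= 2 * F * Num.sqrt (n%:R).
Proof.
case: n A C => [|n] A C F0 HA HC.
  by rewrite big_ord0 mulr_ge0 ?sqrtr_ge0 // mulr_ge0.
apply: final_core => //.
move=> t; rewrite sqr_sqrtr ?ler0n //; apply: le_trans (amgm_sum A C t) _; apply: lerD => //.
by apply: ler_wpM2l => //; exact: sqr_ge0.
Qed.

End Main.

Unset Implicit Arguments.
Set Strict Implicit.

Theorem corollary2p9 (R : realType) :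
  exists kappa : R, 0 < kappa /\
  forall (n : nat) (J : 'M[R[i]]_n) (h : 'I_n -> R),
    hermitian_mx J ->
    (forall k : 'I_n, J k k = 0) ->
    ln (unif_cube_int (fun x => expR (complex.Re (qform J x) + dot_real h x)))
    <= sup [set complex.Re (qform J y) + dot_real h y - Irate y | y in @pm1_cube R n]
       + kappa * hs_norm J * Num.sqrt (n%:R).
Proof.
exists 2; split; first by rewrite ltr0n.
move=> n J h HJ J0.
pose A := fun i j => complex.Re (J i j).
have A0 : forall i, A i i = 0 by move=> i; rewrite /A J0.
have AS : forall i j, A i j = A j i by move=> i j; rewrite /A HJ Re_conj.
have [l [C [ok s L V]]] := @main_ind R n A h 0 A0 AS.
have Eq : forall y, complex.Re (qform J y) = qf A y.
  move=> y; rewrite /qform Re_sum /qf; apply: eq_bigr => i _.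
  by rewrite Re_sum; apply: eq_bigr => j _; rewrite Re_term.
have EZ : unif_cube_int (fun x => expR (complex.Re (qform J x) + dot_real h x)) = Zf A h 0.
  by rewrite /unif_cube_int /Zf; congr (_ * _); apply: eq_bigr => t _; rewrite Eq addr0.
rewrite EZ.
set S := [set _ | y in _].
have ubS : has_ubound S.
  exists (\sum_(i < n) \sum_(j < n) `|A i j| + \sum_(i < n) `|h i|) => x [y yc <-].
  have yn : forall i, `|y i| <= 1 by move=> i; rewrite ler_norml; exact: yc.
  have q1 : qf A y <= \sum_(i < n) \sum_(j < n) `|A i j|.
    rewrite /qf; apply: ler_sum => i _; apply: ler_sum => j _.
    apply: le_trans (ler_norm _) _; rewrite !normrM -[X in _ <= X]mulr1.
    by apply: ler_wpM2l => //; apply: mulr_ile1.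
  have d1 : dot_real h y <= \sum_(i < n) `|h i|.
    rewrite /dot_real; apply: ler_sum => i _.
    apply: le_trans (ler_norm _) _; rewrite !normrM -[X in _ <= X]mulr1.
    by apply: ler_wpM2l.
  have := Irate_ge0 yc; rewrite Eq; lra.
have supP : forall y, @pm1_cube R n y -> Phi A h 0 y <= sup S.
  move=> y yc; move: (ub_le_sup ubS) => /ubP; apply; exists y => //.
  by rewrite /Phi Eq addr0.
have T1 : \sum_(q <- l) q.1 * Phi A h 0 q.2 <= sup S.
  by have := Ebound ok supP; rewrite s mul1r.
have T2 : \sum_(i < n) \sum_(j < n) A i j * C i j <= 2 * hs_norm J * Num.sqrt (n%:R).
  apply: final_bound; first exact: sqrtr_ge0.
    rewrite /hs_norm sqr_sqrtr; last first.
      by apply: sumr_ge0 => i _; apply: sumr_ge0 => j _; rewrite addr_ge0 ?sqr_ge0.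
    apply: ler_sum => i _; apply: ler_sum => j _; rewrite lerDl; exact: sqr_ge0.
  apply: le_trans V _; rewrite ler_pM2l //.
  apply: le_trans (_ : \sum_(j < n) (1 : R) <= _); last by rewrite sumr_const card_ord.
  apply: ler_sum => j _.
  have : S2 l j <= 1.
    rewrite /S2; have := Ebound (F := fun y => y j ^+ 2) (B := 1) ok.
    rewrite s mulr1; apply => y yc; move: (yc j) => /andP[a b]; nra.
  have := sqr_ge0 (mu l j); lra.
apply: le_trans L _; apply: lerD => //.
Qed.
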